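(* Every mean-variance team stochastic game as described in the context has a deterministic joint policy $\boldsymbol{\mu}^*\in\mathcal{D}$ (i.e. each $\mu_i^*$ maps $\mathcal{S}$ to $\mathcal{A}_i$) such that $J(\boldsymbol{\mu}^* )=\max_{\boldsymbol{\mu}\in\mathcal{U}}J(\boldsymbol{\mu})$; in particular $\boldsymbol{\mu}^*$ is a Nash equilibrium, i.e. $J(\mu_i^*,\boldsymbol{\mu}_{-i}^* )\ge J(\mu_i,\boldsymbol{\mu}^*_{-i})$ for all $i\in\mathcal{N}$ and all $\mu_i\in\mathcal{U}_i$.
   Context: A team stochastic game consists of a finite set of agents $\mathcal{N}=\{1,\dots,N\}$, a finite state space $\mathcal{S}$, finite action sets $\mathcal{A}_i$ with joint action set $\mathcal{A}=\prod_i\mathcal{A}_i$, a transition kernel $P(s'|s,\boldsymbol{a})$ and a common reward $r:\mathcal{S}\times\mathcal{A}\to\mathbb{R}$. A policy of agent $i$ is $\mu_i:\mathcal{S}\to\Delta(\mathcal{A}_i)$ (set $\mathcal{U}_i$); a joint policy $\boldsymbol{\mu}=(\mu_1,\dots,\mu_N)\in\mathcal{U}=\prod_i\mathcal{U}_i$ selects $\boldsymbol{a}$ in state $s$ with probability $\prod_i\mu_i(a_i|s)$; $\mathcal{D}\subset\mathcal{U}$ is the set of deterministic joint policies. $(\mu_i,\boldsymbol{\mu}_{-i})$ denotes the joint policy in which agent $i$ uses $\mu_i$ and the others use $\boldsymbol{\mu}_{-i}$. Standing assumption: the Markov chain $P^{\boldsymbol{\mu}}(s'|s)=\sum_{\boldsymbol{a}}\boldsymbol{\mu}(\boldsymbol{a}|s)P(s'|s,\boldsymbol{a})$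 is ergodic for every $\boldsymbol{\mu}\in\mathcal{U}$, with stationary distribution $\pi^{\boldsymbol{\mu}}$. Define $\eta^{\boldsymbol{\mu}}=\sum_s\pi^{\boldsymbol{\mu}}(s)\sum_{\boldsymbol{a}}\boldsymbol{\mu}(\boldsymbol{a}|s)r(s,\boldsymbol{a})$ (long-run average reward), $\zeta^{\boldsymbol{\mu}}=\sum_s\pi^{\boldsymbol{\mu}}(s)\sum_{\boldsymbol{a}}\boldsymbol{\mu}(\boldsymbol{a}|s)(r(s,\boldsymbol{a})-\eta^{\boldsymbol{\mu}})^2$ (long-run variance), and for a fixed $\beta\ge0$, $J(\boldsymbol{\mu})=\eta^{\boldsymbol{\mu}}-\beta\zeta^{\boldsymbol{\mu}}$. *)

(* Defs.v *)
From HB Require Import structures.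
From mathcomp Require Import all_boot all_order all_algebra.
From mathcomp Require Import reals.
Set Implicit Arguments. Unset Strict Implicit. Unset Printing Implicit Defensive.
Import Order.TTheory GRing.Theory Num.Theory.
Local Open Scope ring_scope.

Section TeamGame.
Variables (R : realType) (N : nat) (S : finType) (A : 'I_N -> finType).

Definition jaction := {dffun forall i : 'I_N, A i}.

(* a (possibly randomized) joint policy: mu i s a_i = mu_i(a_i | s) *)
Definition jpolicy := forall i : 'I_N, S -> A i -> R.

Definition valid_local_policy (i : 'I_N) (m : S -> A i -> R) : Prop :=
  (forall s a, 0 <= m s a) /\ (forall s, \sum_(a : A i) m s a = 1).

Definition valid_policy (mu : jpolicy) : Prop :=
  forall i, valid_local_policy (mu i).

Definition jprob (mu : jpolicy) (s : S) (a : jaction) : R :=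
  \prod_(i < N) mu i s (a i).

Definition replace_policy (mu : jpolicy) (i : 'I_N) (m : S -> A i -> R)
  : jpolicy := dfwith mu m.

Definition det_policy (d : forall i : 'I_N, S -> A i) : jpolicy :=
  fun i s a => if a == d i s then 1 else 0.

Definition valid_kernel (P : S -> jaction -> S -> R) : Prop :=
  (forall s a s', 0 <= P s a s') /\ (forall s a, \sum_(s' : S) P s a s' = 1).

Definition Pmu (P : S -> jaction -> S -> R) (mu : jpolicy) (s s' : S) : R :=
  \sum_(a : jaction) jprob mu s a * P s a s'.

Fixpoint npow (Q : S -> S -> R) (n : nat) (s s' : S) : R :=
  match n with
  | 0%N => (s == s')%:R
  | k.+1 => \sum_(t : S) npow Q k s t * Q t s'
  end.

(* ergodic finite chain (irreducible and aperiodic), in the equivalent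
   "regular / primitive" form: some power has all entries positive *)
Definition ergodic (Q : S -> S -> R) : Prop :=
  exists n : nat, (0 < n)%N /\ forall s s', 0 < npow Q n s s'.

Definition stationary (Q : S -> S -> R) (pi : S -> R) : Prop :=
  (forall s, 0 <= pi s) /\ \sum_(s : S) pi s = 1 /\
  (forall s', \sum_(s : S) pi s * Q s s' = pi s').

(* long-run average reward, computed w.r.t. the stationary distribution pi *)
Definition eta (r : S -> jaction -> R) (mu : jpolicy) (pi : S -> R) : R :=
  \sum_(s : S) pi s * \sum_(a : jaction) jprob mu s a * r s a.

Definition zeta (r : S -> jaction -> R) (mu : jpolicy) (pi : S -> R) : R :=
  \sum_(s : S) pi s *
    \sum_(a : jaction) jprob mu s a * (r s a - eta r mu pi) ^+ 2.

Definition Jmv (beta : R) (r : S -> jaction -> R) (mu : jpolicy)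
  (pi : S -> R) : R :=
  eta r mu pi - beta * zeta r mu pi.

End TeamGame.

(* Main.v *)
Require Import Defs.
From HB Require Import structures.
From mathcomp Require Import all_boot all_order all_algebra.
From mathcomp Require Import reals.
From mathcomp Require Import ring lra.
From Stdlib Require Import IndefiniteDescription FunctionalExtensionality.
Import Order.TTheory GRing.Theory Num.Theory.
Local Open Scope ring_scope.
Set Implicit Arguments. Unset Strict Implicit. Unset Printing Implicit Defensive.

Lemma sum_prod_dep (R : comNzRingType) (I : finType) (T_ : I -> finType)
  (F : forall i, T_ i -> R) :
  \sum_(a : {dffun forall i : I, T_ i}) \prod_i F i (a i) = \prod_i \sum_(b : T_ i) F i b.
Proof.
pose P_ := fun i => [ffun b : T_ i => F i b].
transitivity (\prod_i \sum_(b : T_ i) P_ i b); last first.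
  by apply: eq_bigr => i _; apply: eq_bigr => b _; rewrite ffunE.
under [RHS]eq_bigr => i _ do rewrite (big_tag (fun i => P_ i) i).
rewrite bigA_distr_big_dep.
transitivity (\sum_(t : fprod T_) \prod_(i in I) P_ i (t i)).
  rewrite (reindex (@dffun_of_fprod I T_)); last exact/onW_bij/dffun_of_fprod_bij.
  by apply: eq_bigr => t _; apply: eq_bigr => i _; rewrite !ffunE.
rewrite big_fprod.
by apply: congr_big.
Qed.

Section X.
Variables (R : realType) (S : finType).

Lemma sumS_enum (F : S -> R) : \sum_(s : S) F s = \sum_(i < #|S|) F (enum_val i).
Proof.
by rewrite (reindex (@enum_val S predT)) //; apply/onW_bij/enum_val_bij.
Qed.

Lemma stat_exists (Q : S -> S -> R) (s0 : S) :
  (forall s s', 0 <= Q s s') -> (forall s, \sum_(s' : S) Q s s' = 1) ->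
  exists pi, stationary Q pi.
Proof.
move=> Qge0 Qsum.
pose n := #|S|.
pose M : 'M[R]_n := \matrix_(i, j) (Q (enum_val i) (enum_val j) - (i == j)%:R).
have M1 : M *m const_mx 1 = 0 :> 'cV[R]_n.
  apply/matrixP => i k; rewrite !mxE.
  under eq_bigr do rewrite !mxE mulr1.
  rewrite sumrB -sumS_enum Qsum.
  by rewrite (bigD1 i) //= eqxx big1 ?addr0 ?subrr // => j /negbTE; rewrite eq_sym => ->.
have : \det M == 0.
  rewrite -det_tr; apply/det0P; exists (const_mx 1 : 'rV[R]_n).
    apply/eqP => /matrixP /(_ 0 (enum_rank s0)); rewrite !mxE => /eqP; by rewrite oner_eq0.
  by apply: trmx_inj; rewrite trmx_mul trmxK trmx_const M1 trmx0.
case/det0P => w wne0 wM.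
have wQ j : \sum_(i < n) w 0 i * Q (enum_val i) (enum_val j) = w 0 j.
  have := congr1 (fun A : 'rV[R]_n => A 0 j) wM; rewrite !mxE => H.
  apply/eqP; rewrite -subr_eq0; apply/eqP; rewrite -[RHS]H.
  under [in RHS]eq_bigr do rewrite mxE mulrBr.
  rewrite sumrB; congr (_ - _).
  by rewrite (bigD1 j) //= eqxx mulr1 big1 ?addr0 // => i /negbTE ->; rewrite mulr0.
pose u (s : S) : R := `|w 0 (enum_rank s)|.
have uge0 s : 0 <= u s by rewrite /u normr_ge0.
have uQ s' : u s' <= \sum_s u s * Q s s'.
  rewrite /u -(wQ (enum_rank s')) enum_rankK.
  rewrite sumS_enum; apply: le_trans (ler_norm_sum _ _ _) _.
  apply: ler_sum => i _; rewrite normrM (ger0_norm (Qge0 _ _)) enum_valK //.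
have tot : \sum_s' \sum_s u s * Q s s' = \sum_s u s.
  rewrite exchange_big; apply: eq_bigr => s _; by rewrite -mulr_sumr Qsum mulr1.
have uinv s' : \sum_s u s * Q s s' = u s'.
  have : \sum_s' (\sum_s u s * Q s s' - u s') = 0 by rewrite sumrB tot subrr.
  move/eqP; rewrite psumr_eq0 => [/allP/(_ s') /= H|x _]; last by rewrite subr_ge0.
  by apply/eqP; rewrite -subr_eq0 H // mem_index_enum.
have [i wi] : exists i, w 0 i != 0.
  apply/existsP; move: wne0; apply: contraR => /existsPn H.
  apply/eqP/matrixP => a b; rewrite (ord1 a) mxE; apply/eqP; by have := H b; rewrite negbK.
have Zpos : 0 < \sum_s u s.
  apply: lt_le_trans (_ : u (enum_val i) <= _).
    by rewrite /u enum_valK normr_gt0.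
  by rewrite (bigD1 (enum_val i)) //= lerDl sumr_ge0.
exists (fun s => u s / \sum_s u s); split; [|split].
- by move=> s; rewrite divr_ge0 // ltW.
- by rewrite -mulr_suml divff // gt_eqF.
- move=> s'; rewrite -(uinv s') mulr_suml; apply: eq_bigr => s _; by rewrite mulrAC.
Qed.

Definition inv_vec (Q : S -> S -> R) (v : S -> R) :=
  forall s', \sum_s v s * Q s s' = v s'.

Lemma npow_inv (Q : S -> S -> R) (v : S -> R) : inv_vec Q v -> forall n s', \sum_s v s * npow Q n s s' = v s'.
Proof.
move=> Hv; elim=> [|n IH] s' /=.
  rewrite (bigD1 s') //= eqxx mulr1 big1 ?addr0 // => s /negbTE ->; by rewrite mulr0.
under eq_bigr do rewrite mulr_sumr.
rewrite exchange_big /= -(Hv s'); apply: eq_bigr => t _.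
by rewrite -IH mulr_suml; apply: eq_bigr => s _; rewrite mulrA.
Qed.

Lemma stat_pos (Q : S -> S -> R) (pi : S -> R) : ergodic Q -> stationary Q pi -> forall s, 0 < pi s.
Proof.
move=> [n [_ Hn]] [pge0 [psum pinv]] s'.
rewrite -(npow_inv pinv n s').
have [s ps] : exists s, 0 < pi s.
  case: (boolP [exists s, 0 < pi s]) => [/existsP //|/existsPn H].
  have : \sum_s pi s = 0.
    by apply: big1 => s _; apply/eqP; rewrite eq_le pge0 andbT leNgt H.
  by rewrite psum => /eqP; rewrite oner_eq0.
rewrite (bigD1 s) //=; apply: lt_le_trans (_ : pi s * npow Q n s s' <= _).
  by rewrite mulr_gt0.
by rewrite lerDl sumr_ge0 // => t _; rewrite mulr_ge0 // ltW.
Qed.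

Lemma inv_zero (Q : S -> S -> R) (v : S -> R) sx : ergodic Q -> (forall s, 0 <= v s) -> inv_vec Q v ->
  v sx = 0 -> forall s, v s = 0.
Proof.
move=> [n [_ Hn]] vge0 vinv vx s.
have := npow_inv vinv n sx; rewrite vx => /eqP.
rewrite psumr_eq0 => [/allP/(_ s (mem_index_enum _))/=|t _]; last first.
  by rewrite mulr_ge0 // ltW.
by rewrite mulf_eq0 (gt_eqF (Hn _ _)) orbF => /eqP.
Qed.

Lemma exists_min (F : S -> R) (s0 : S) : exists m, forall s, F m <= F s.
Proof.
by case: (@arg_minP _ R S s0 xpredT F isT) => m _ H; exists m => s; exact: H.
Qed.

Lemma inv_unique (Q : S -> S -> R) (pi nu : S -> R) : ergodic Q -> stationary Q pi ->
  (forall s, 0 <= nu s) -> inv_vec Q nu -> exists c, forall s, nu s = c * pi s.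
Proof.
move=> erg st nuge0 nuinv.
have ppos := stat_pos erg st.
case: (pickP (fun _ : S => true)) => [s0 _|H]; last first.
  by exists 0 => s; have := H s.
have [m Hm] := exists_min (fun s => nu s / pi s) s0.
pose c := nu m / pi m.
exists c.
have vinv : inv_vec Q (fun s => nu s - c * pi s).
  move=> s'; under eq_bigr do rewrite mulrBl -mulrA.
  by rewrite sumrB -mulr_sumr nuinv; case: st => _ [_ ->].
have := inv_zero erg _ vinv (_ : nu m - c * pi m = 0).
move=> H s; apply/eqP; rewrite -subr_eq0; apply/eqP; apply: H.
- move=> t; rewrite subr_ge0 -ler_pdivlMr //; exact: Hm.
- by rewrite /c divfK ?subrr // gt_eqF.
Qed.

Lemma stat_unique (Q : S -> S -> R) (pi1 pi2 : S -> R) : ergodic Q -> stationary Q pi1 -> stationary Q pi2 ->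
  forall s, pi1 s = pi2 s.
Proof.
move=> erg st1 st2.
have [c Hc] := inv_unique erg st2 (proj1 st1) (proj2 (proj2 st1)).
have c1 : c = 1.
  have := proj1 (proj2 st1); under eq_bigr do rewrite Hc.
  by rewrite -mulr_sumr (proj1 (proj2 st2)) mulr1.
by move=> s; rewrite Hc c1 mul1r.
Qed.

End X.

Section Game.
Variables (R : realType) (N : nat) (S : finType) (A : 'I_N -> finType).
Variable (P : S -> jaction A -> S -> R).
Hypothesis Pk : valid_kernel P.
Hypothesis erg : forall mu : jpolicy R S A, valid_policy mu -> ergodic (Pmu P mu).

Definition G (g : S -> jaction A -> R) (mu : jpolicy R S A) (pi : S -> R) : R :=
  \sum_s pi s * \sum_b jprob mu s b * g s b.

Definition setp (mu : jpolicy R S A) (s0 : S) (a : jaction A) : jpolicy R S A :=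
  fun i s b => if s == s0 then (if b == a i then 1 else 0) else mu i s b.

Lemma jprob_ge0 (mu : jpolicy R S A) (s : S) (b : jaction A) : valid_policy mu -> 0 <= jprob mu s b.
Proof. by move=> v; rewrite /jprob prodr_ge0 // => i _; case: (v i) => H _. Qed.

Lemma jprob_sum1 (mu : jpolicy R S A) (s : S) : valid_policy mu -> \sum_b jprob mu s b = 1.
Proof.
move=> v; rewrite /jprob (sum_prod_dep (fun i b => mu i s b)).
by apply: big1 => i _; case: (v i) => _ ->.
Qed.

Lemma Pmu_ge0 (mu : jpolicy R S A) (s s' : S) : valid_policy mu -> 0 <= Pmu P mu s s'.
Proof.
move=> v; rewrite /Pmu sumr_ge0 // => b _; rewrite mulr_ge0 ?jprob_ge0 //.
by case: Pk.
Qed.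

Lemma Pmu_sum1 (mu : jpolicy R S A) (s : S) : valid_policy mu -> \sum_s' Pmu P mu s s' = 1.
Proof.
move=> v; rewrite /Pmu exchange_big /= -(jprob_sum1 s v); apply: eq_bigr => b _.
by rewrite -mulr_sumr; case: Pk => _ ->; rewrite mulr1.
Qed.

Lemma sum_ind (T : finType) (a : T) : \sum_(b : T) (if b == a then 1 else 0 : R) = 1.
Proof. by rewrite -big_mkcond big_pred1_eq. Qed.

Lemma sum_ind_mul (T : finType) (a : T) (h : T -> R) :
  \sum_(b : T) (if b == a then 1 else 0 : R) * h b = h a.
Proof.
rewrite (bigD1 a) //= eqxx mul1r big1 ?addr0 // => b /negbTE ->; by rewrite mul0r.
Qed.

Lemma setp_valid (mu : jpolicy R S A) (s0 : S) (a : jaction A) : valid_policy mu -> valid_policy (setp mu s0 a).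
Proof.
move=> v i; case: (v i) => H1 H2; split => [s b|s]; rewrite /setp; case: eqP => _ //.
- by case: eqP.
- exact: sum_ind.
Qed.

Lemma jprob_setp_in (mu : jpolicy R S A) (s0 : S) (a b : jaction A) :
  jprob (setp mu s0 a) s0 b = if b == a then 1 else 0.
Proof.
rewrite /jprob /setp eqxx; case: eqP => [->|ne].
  by apply: big1 => i _; rewrite eqxx.
case: (boolP [forall i, b i == a i]) => [/forallP H|/forallPn [i Hi]].
  by case: ne; apply/ffunP => i; apply/eqP.
by rewrite (bigD1 i) //= (negbTE Hi) mul0r.
Qed.

Lemma jprob_setp_out (mu : jpolicy R S A) (s0 : S) (a : jaction A) (s : S) (b : jaction A) : s != s0 ->
  jprob (setp mu s0 a) s b = jprob mu s b.
Proof. by move=> ne; rewrite /jprob /setp; apply: eq_bigr => i _; rewrite (negbTE ne). Qed.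

Lemma step (g : S -> jaction A -> R) (mu : jpolicy R S A) (pi : S -> R) (s0 : S) : valid_policy mu -> stationary (Pmu P mu) pi ->
  exists a pia, stationary (Pmu P (setp mu s0 a)) pia /\
    G g mu pi <= G g (setp mu s0 a) pia.
Proof.
move=> v st.
have Hex a : exists pia, stationary (Pmu P (setp mu s0 a)) pia.
  apply: (stat_exists s0).
  - by move=> s s'; apply/Pmu_ge0/setp_valid.
  - by move=> s; apply/Pmu_sum1/setp_valid.
pose PI a := proj1_sig (constructive_indefinite_description _ (Hex a)).
have PIst a : stationary (Pmu P (setp mu s0 a)) (PI a).
  exact: (proj2_sig (constructive_indefinite_description _ (Hex a))).
have PIpos a : 0 < PI a s0 := stat_pos (erg (setp_valid s0 a v)) (PIst a) s0.
have pipos := stat_pos (erg v) st.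
pose lam a := pi s0 * jprob mu s0 a / PI a s0.
have lamge0 a : 0 <= lam a.
  by rewrite /lam divr_ge0 ?mulr_ge0 ?jprob_ge0 // ltW.
pose nu s := \sum_a lam a * PI a s.
have F1 : nu s0 = pi s0.
  rewrite /nu /lam; under eq_bigr do rewrite divfK ?gt_eqF //.
  by rewrite -mulr_sumr jprob_sum1 // mulr1.
have Mix (h : S -> jaction A -> R) s :
    \sum_a lam a * (PI a s * \sum_b jprob (setp mu s0 a) s b * h s b)
    = nu s * \sum_b jprob mu s b * h s b.
  case: (eqVneq s s0) => [->|ne].
    under eq_bigr => a _.
      rewrite (eq_bigr (fun b => (if b == a then 1 else 0) * h s0 b)); last first.
        by move=> b _; rewrite jprob_setp_in.
      rewrite sum_ind_mul /lam mulrA divfK ?gt_eqF //.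
    over.
    by rewrite F1 mulr_sumr; apply: eq_bigr => a _; rewrite mulrA.
  under eq_bigr => a _.
    rewrite (eq_bigr (fun b => jprob mu s b * h s b)); last first.
      by move=> b _; rewrite jprob_setp_out.
    rewrite mulrA.
  over.
  by rewrite -mulr_suml.
have nuinv : inv_vec (Pmu P mu) nu.
  move=> s'; rewrite /Pmu.
  under eq_bigr do rewrite -(Mix (fun s b => P s b s')).
  rewrite exchange_big /=; apply: eq_bigr => a _.
  rewrite -mulr_sumr; congr (_ * _); exact: (proj2 (proj2 (PIst a)) s').
have nuge0 s : 0 <= nu s.
  by rewrite sumr_ge0 // => a _; rewrite mulr_ge0 //; case: (PIst a).
have [c Hc] := inv_unique (erg v) st nuge0 nuinv.
have c1 : c = 1.
  have := Hc s0; rewrite F1 => /eqP; rewrite -subr_eq0 -{1}(mul1r (pi s0)) -mulrBl.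
  by rewrite mulf_eq0 (gt_eqF (pipos s0)) orbF subr_eq0 => /eqP.
have nupi s : nu s = pi s by rewrite Hc c1 mul1r.
have lamsum : \sum_a lam a = 1.
  case: st => _ [<- _]; under [RHS]eq_bigr do rewrite -nupi.
  rewrite /nu exchange_big /=; apply: eq_bigr => a _.
  by rewrite -mulr_sumr; case: (PIst a) => _ [-> _]; rewrite mulr1.
have Gmix : G g mu pi = \sum_a lam a * G g (setp mu s0 a) (PI a).
  rewrite /G; under eq_bigr do rewrite -nupi -(Mix g).
  rewrite exchange_big /=; apply: eq_bigr => a _; by rewrite mulr_sumr.
case: (boolP [exists a, G g mu pi <= G g (setp mu s0 a) (PI a)]).
  by case/existsP => a Ha; exists a, (PI a); split.
move/existsPn => H; exfalso.
have : \sum_a lam a * (G g mu pi - G g (setp mu s0 a) (PI a)) = 0.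
  under eq_bigr do rewrite mulrBr.
  by rewrite sumrB -mulr_suml lamsum mul1r -Gmix subrr.
move/eqP; rewrite psumr_eq0 => [/allP Hall|a _]; last first.
  by rewrite mulr_ge0 // subr_ge0 ltW // ltNge H.
have : \sum_a lam a = 0.
  apply: big1 => a _; have := Hall a (mem_index_enum _).
  by rewrite mulf_eq0 subr_eq0 eq_sym => /orP [/eqP //|/eqP E]; move: (H a); rewrite E lexx.
by rewrite lamsum => /eqP; rewrite oner_eq0.
Qed.


Lemma detall (g : S -> jaction A -> R) (mu : jpolicy R S A) (pi : S -> R)
  (a0 : jaction A) (l : seq S) :
  valid_policy mu -> stationary (Pmu P mu) pi ->
  exists (nu : jpolicy R S A) (e : S -> jaction A) (pinu : S -> R),
    [/\ valid_policy nu, stationary (Pmu P nu) pinu, G g mu pi <= G g nu pinu &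
      forall s, s \in l -> forall i b, nu i s b = if b == e s i then 1 else 0].
Proof.
move=> v st; elim: l => [|s0 l [nu [e [pinu [vnu stnu Gle Hdet]]]]].
  by exists mu, (fun _ => a0), pi; split.
have [a [pia [sta Gle2]]] := step g s0 vnu stnu.
exists (setp nu s0 a), (fun s => if s == s0 then a else e s), pia; split.
- exact: setp_valid.
- exact: sta.
- exact: le_trans Gle Gle2.
- move=> s; rewrite in_cons => /orP [/eqP ->|sl] i b; rewrite /setp.
    by rewrite eqxx.
  by case: eqP => // _; exact: Hdet.
Qed.

Definition dpol (e : {ffun S -> jaction A}) : jpolicy R S A :=
  det_policy R (fun i s => e s i).

Lemma linopt (g : S -> jaction A -> R) (mu : jpolicy R S A) (pi : S -> R)
  (a0 : jaction A) :
  valid_policy mu -> stationary (Pmu P mu) pi ->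
  exists (e : {ffun S -> jaction A}) (pid : S -> R),
    stationary (Pmu P (dpol e)) pid /\ G g mu pi <= G g (dpol e) pid.
Proof.
move=> v st.
have [nu [e [pinu [vnu stnu Gle Hdet]]]] := detall g a0 (enum S) v st.
have E : nu = dpol [ffun s => e s].
  apply: functional_extensionality_dep => i.
  apply: functional_extensionality => s; apply: functional_extensionality => b.
  by rewrite Hdet ?mem_enum // /dpol /det_policy ffunE.
by rewrite E in stnu Gle; exists [ffun s => e s], pinu.
Qed.

Lemma dpol_valid e : valid_policy (dpol e).
Proof.
move=> i; split => [s b|s]; rewrite /dpol /det_policy.
  by case: eqP.
exact: sum_ind.
Qed.

Lemma G_lin3 (mu : jpolicy R S A) pi (x y z : R) f1 f2 f3 :
  G (fun s b => x * f1 s b + y * f2 s b + z * f3 s b) mu pi =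
  x * G f1 mu pi + y * G f2 mu pi + z * G f3 mu pi.
Proof.
rewrite /G !mulr_sumr -!big_split /=; apply: eq_bigr => s _.
have -> : \sum_b jprob mu s b * (x * f1 s b + y * f2 s b + z * f3 s b) =
  x * (\sum_b jprob mu s b * f1 s b) + y * (\sum_b jprob mu s b * f2 s b) +
  z * (\sum_b jprob mu s b * f3 s b).
  by rewrite !mulr_sumr -!big_split /=; apply: eq_bigr => b _; ring.
ring.
Qed.

Lemma G_ext (mu : jpolicy R S A) pi f1 f2 :
  (forall s b, f1 s b = f2 s b) -> G f1 mu pi = G f2 mu pi.
Proof.
by move=> H; rewrite /G; apply: eq_bigr => s _; congr (_ * _); apply: eq_bigr => b _; rewrite H.
Qed.

Lemma G1 (mu : jpolicy R S A) pi : valid_policy mu -> stationary (Pmu P mu) pi ->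
  G (fun _ _ => 1) mu pi = 1.
Proof.
move=> v [_ [psum _]]; rewrite /G -{2}psum; apply: eq_bigr => s _.
under eq_bigr do rewrite mulr1.
by rewrite jprob_sum1 // mulr1.
Qed.

Lemma Jmv_G (beta : R) (r : S -> jaction A -> R) (mu : jpolicy R S A) pi :
  valid_policy mu -> stationary (Pmu P mu) pi ->
  Jmv beta r mu pi = G r mu pi - beta * (G (fun s b => r s b ^+ 2) mu pi - G r mu pi ^+ 2).
Proof.
move=> v st.
have eE : Defs.eta r mu pi = G r mu pi by [].
rewrite /Jmv eE; congr (_ - beta * _).
rewrite /zeta eE.
set e := G r mu pi.
transitivity (G (fun s b => 1 * r s b ^+ 2 + (- (2 * e)) * r s b + e ^+ 2 * 1) mu pi).
  by rewrite /G; apply: eq_bigr => s _; congr (_ * _); apply: eq_bigr => b _; congr (_ * _); ring.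
rewrite G_lin3 G1 // -/e; ring.
Qed.

Lemma convex_step (beta : R) (r : S -> jaction A -> R) (mu nu : jpolicy R S A) pi pi' :
  0 <= beta ->
  valid_policy mu -> stationary (Pmu P mu) pi ->
  valid_policy nu -> stationary (Pmu P nu) pi' ->
  let e := G r mu pi in
  let g := fun s b => 1 * r s b + (- beta) * (r s b ^+ 2) + (2 * beta * e) * r s b in
  G g mu pi <= G g nu pi' ->
  Jmv beta r mu pi <= Jmv beta r nu pi'.
Proof.
move=> b0 v st v' st' e g H.
rewrite (Jmv_G _ _ v st) (Jmv_G _ _ v' st').
move: H; rewrite /g !G_lin3 -/e.
set X' := G r nu pi'; set Y := G _ mu pi; set Y' := G _ nu pi'.
have Hsq : 0 <= beta * (X' - e) ^+ 2 by rewrite mulr_ge0 // sqr_ge0.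
move=> H; nra.
Qed.

End Game.

Unset Implicit Arguments.


Theorem theorem1 (R : realType) (N : nat) (S : finType) (A : 'I_N -> finType)
  (P : S -> jaction A -> S -> R) (r : S -> jaction A -> R) (beta : R) :
  (forall i : 'I_N, (0 < #|A i|)%N) ->
  valid_kernel P ->
  0 <= beta ->
  (forall mu : jpolicy R S A, valid_policy mu -> ergodic (Pmu P mu)) ->
  exists (d : forall i : 'I_N, S -> A i),
    (* optimality of mu_star over U *)
    (forall (mu : jpolicy R S A) (pistar pi : S -> R),
       valid_policy mu ->
       stationary (Pmu P (det_policy R d)) pistar -> stationary (Pmu P mu) pi ->
       Jmv beta r mu pi <= Jmv beta r (det_policy R d) pistar)
    /\
    (* Nash equilibrium *)
    (forall (i : 'I_N) (m : S -> A i -> R) (pistar pi : S -> R),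
       valid_local_policy m ->
       stationary (Pmu P (det_policy R d)) pistar ->
       stationary (Pmu P (replace_policy (det_policy R d) m)) pi ->
       Jmv beta r (replace_policy (det_policy R d) m) pi <= Jmv beta r (det_policy R d) pistar).
Proof.
move=> Hne Pk b0 erg.
pose a0 : jaction A := finfun (fun i => xchoose (elimT card_gt0P (Hne i))).
have best : exists es : {ffun S -> jaction A}, forall e pe ps,
    stationary (Pmu P (dpol R e)) pe -> stationary (Pmu P (dpol R es)) ps ->
    Jmv beta r (dpol R e) pe <= Jmv beta r (dpol R es) ps.
  case: (pickP (fun _ : S => true)) => [s0 _|Hno]; last first.
    exists [ffun=> a0] => e pe ps _ [_ [H _]]; exfalso; move: H.
    rewrite big1 => [/eqP|s]; last by have := Hno s.
    by rewrite eq_sym oner_eq0.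
  have Hex e : exists p, stationary (Pmu P (dpol R e)) p.
    apply: (stat_exists s0).
    - by move=> s s'; apply/(Pmu_ge0 Pk)/dpol_valid.
    - by move=> s; apply/(Pmu_sum1 Pk)/dpol_valid.
  pose PI e := proj1_sig (constructive_indefinite_description _ (Hex e)).
  have PIst e : stationary (Pmu P (dpol R e)) (PI e).
    exact: (proj2_sig (constructive_indefinite_description _ (Hex e))).
  pose F e := Jmv beta r (dpol R e) (PI e).
  case: (@arg_maxP _ R _ [ffun=> a0] xpredT F isT) => es _ Hmax.
  exists es => e pe ps ste sts.
  have -> : pe = PI e.
    apply: functional_extensionality => s.
    exact: (stat_unique (erg _ (dpol_valid R e)) ste (PIst e)).
  have -> : ps = PI es.
    apply: functional_extensionality => s.
    exact: (stat_unique (erg _ (dpol_valid R es)) sts (PIst es)).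
  exact: Hmax.
have [es Hes] := best.
exists (fun i s => es s i).
have opt : forall (mu : jpolicy R S A) (pistar pi : S -> R), valid_policy mu ->
    stationary (Pmu P (dpol R es)) pistar -> stationary (Pmu P mu) pi ->
    Jmv beta r mu pi <= Jmv beta r (dpol R es) pistar.
  move=> mu ps pi v sts st.
  pose e0 := G r mu pi.
  pose g := fun s b => 1 * r s b + (- beta) * (r s b ^+ 2) + (2 * beta * e0) * r s b.
  have [e [pid [std Gle]]] := linopt Pk erg g a0 v st.
  apply: le_trans (Hes e pid ps std sts).
  exact: (convex_step b0 v st (dpol_valid R e) std Gle).
split; first exact: opt.
move=> i m ps pi vm sts st; apply: opt => // j.
case: (eqVneq i j) => [<-|ne]; first by rewrite /replace_policy dfwith_in.
rewrite /replace_policy dfwith_out //; exact: (dpol_valid R es).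
Qed.
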